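(* Let $k$ be a positive integer and $Y$ a finite set. The algebra $\mathbf A=Y^{[k]}$ is strongly abelian (i.e., the full relation $A\times A$ is a strongly abelian congruence) and $c_{\mathbf A}(n)\le |Y|^{n^{1/k}}$ for every $n$.
   Context: Fix the signature consisting of a unary symbol $s$ and a $k$-ary symbol $d$. For a set $Y$, $Y^{[k]}$ is the algebra with universe $Y^k$ and operations $s((y_1,y_2,\dots,y_k))=(y_2,\dots,y_k,y_1)$ and $d((y^1_1,\dots,y^1_k),\dots,(y^k_1,\dots,y^k_k))=(y^1_1,y^2_2,\dots,y^k_k)$. For a finite algebra $\mathbf A$, $c_{\mathbf A}(n)$ is the maximum of $|\mathrm{Hom}(\mathbf X,\mathbf A)|$ over algebras $\mathbf X$ in the signature of $\mathbf A$ with at most $n$ elements. A congruence $\alpha$ of $\mathbf A$ is strongly abelian if for every $m\ge1$, every $m$-ary term operation $t$ of $\mathbf A$ and all $x_1,\dots,x_m,y_1,\dots,y_m,z_2,\dots,z_m\in A$ with $(x_i,y_i)\in\alpha$ for all $i$ and $(y_i,z_i)\in\alpha$ for $i\ge2$, $t(x_1,\dots,x_m)=t(y_1,\dots,y_m)$ implies $t(x_1,z_2,\dots,z_m)=t(y_1,z_2,\dots,z_m)$. *)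

(* Defs.v *)
From HB Require Import structures.
From mathcomp Require Import all_boot all_order all_algebra.
From mathcomp Require Import all_classical all_reals all_analysis.
Set Implicit Arguments. Unset Strict Implicit. Unset Printing Implicit Defensive.

(* Signature: one unary symbol s and one k-ary symbol d.
   An algebra in this signature on a carrier T is given by
   sT : T -> T and dT : ('I_k -> T) -> T. *)

Inductive term (k m : nat) : Type :=
  | Var : 'I_m -> term k m
  | Sop : term k m -> term k m
  | Dop : ('I_k -> term k m) -> term k m.

Fixpoint eval_term (k m : nat) (T : Type) (sT : T -> T) (dT : ('I_k -> T) -> T)
    (e : 'I_m -> T) (t : term k m) : T :=
  match t with
  | Var i => e i
  | Sop u => sT (eval_term sT dT e u)
  | Dop f => dT (fun j => eval_term sT dT e (f j))
  end.

Definition is_congruence (k : nat) (T : Type) (sT : T -> T) (dT : ('I_k -> T) -> T)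
    (alpha : T -> T -> Prop) : Prop :=
  [/\ (forall x, alpha x x),
      (forall x y, alpha x y -> alpha y x),
      (forall x y z, alpha x y -> alpha y z -> alpha x z),
      (forall x y, alpha x y -> alpha (sT x) (sT y)) &
      (forall f g : 'I_k -> T, (forall i, alpha (f i) (g i)) -> alpha (dT f) (dT g))].

(* alpha is a strongly abelian congruence: the condition of the paper, where
   the tuple (x_1, z_2, ..., z_m) is encoded as the function which is x at
   index 0 and z elsewhere (z at index 0 is irrelevant). *)
Definition strongly_abelian_cong (k : nat) (T : Type) (sT : T -> T)
    (dT : ('I_k -> T) -> T) (alpha : T -> T -> Prop) : Prop :=
  is_congruence sT dT alpha /\
  forall (m : nat), 0 < m ->
  forall (t : term k m) (x y z : 'I_m -> T),
    (forall i, alpha (x i) (y i)) ->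
    (forall i : 'I_m, 0 < i -> alpha (y i) (z i)) ->
    eval_term sT dT x t = eval_term sT dT y t ->
    eval_term sT dT (fun i : 'I_m => if val i == 0 then x i else z i) t =
    eval_term sT dT (fun i : 'I_m => if val i == 0 then y i else z i) t.

Definition powk_s (k : nat) (Y : finType) (y : {ffun 'I_k -> Y}) : {ffun 'I_k -> Y} :=
  [ffun i => y (ordS i)].

Definition powk_d (k : nat) (Y : finType) (f : 'I_k -> {ffun 'I_k -> Y}) : {ffun 'I_k -> Y} :=
  [ffun i => f i i].

Definition is_hom_powk (k : nat) (Y : finType) (T : finType) (sX : T -> T)
    (dX : ('I_k -> T) -> T) (h : {ffun T -> {ffun 'I_k -> Y}}) : bool :=
  [forall x, h (sX x) == powk_s (h x)] &&
  [forall f : {ffun 'I_k -> T}, h (dX f) == powk_d (fun i => h (f i))].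

Definition nhom_powk (k : nat) (Y : finType) (T : finType) (sX : T -> T)
    (dX : ('I_k -> T) -> T) : nat :=
  #|[set h : {ffun T -> {ffun 'I_k -> Y}} | is_hom_powk sX dX h]|.

(* Main.v *)
Require Import Defs.
From HB Require Import structures.
From mathcomp Require Import all_boot all_order all_algebra.
From mathcomp Require Import all_classical all_reals all_analysis.
Import Order.TTheory GRing.Theory Num.Theory.
Local Open Scope ring_scope.

Section Aux.
Variables (k : nat) (Y : finType).
Local Open Scope nat_scope.

Fixpoint tv (m : nat) (t : term k m) : 'I_k -> 'I_m * 'I_k :=
  match t with
  | Var i => fun j => (i, j)
  | Sop u => fun j => tv _ u (ordS j)
  | Dop f => fun j => tv _ (f j) j
  end.
Arguments tv {m}.

Lemma tvP m (t : term k m) (x : 'I_m -> {ffun 'I_k -> Y}) j :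
  eval_term (@powk_s k Y) (@powk_d k Y) x t j = x (tv t j).1 (tv t j).2.
Proof.
elim: t j => [i|u IH|f IH] j /=; first by [].
  by rewrite /powk_s ffunE IH.
by rewrite /powk_d ffunE IH.
Qed.

Lemma iter_ordS j (i : 'I_k) : val (iter j (@ordS k) i) = (i + j) %% k.
Proof.
elim: j => [|j IH] /=; first by rewrite addn0 modn_small.
by rewrite IH -addn1 modnDml -addnA addn1.
Qed.

Lemma hom_iter (T : finType) sX dX (h : {ffun T -> {ffun 'I_k -> Y}}) :
  is_hom_powk sX dX h -> forall j x i, h (iter j sX x) i = h x (iter j (@ordS k) i).
Proof.
case/andP => /forallP Hs _ j x.
elim: j => [|j IH] i //=.
by rewrite (eqP (Hs _)) /powk_s ffunE IH -iterS iterSr.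
Qed.
Arguments hom_iter {T sX dX h}.

Lemma hom_coord0 (T : finType) sX dX (h : {ffun T -> {ffun 'I_k -> Y}}) :
  is_hom_powk sX dX h -> forall (j : 'I_k) x i0, val i0 = 0 -> h x j = h (iter j sX x) i0.
Proof.
move=> Hh j x i0 H0; rewrite (hom_iter Hh); congr (h x _); apply: val_inj.
by rewrite iter_ordS /= H0 add0n modn_small.
Qed.

Lemma hom_d (T : finType) sX dX (h : {ffun T -> {ffun 'I_k -> Y}}) :
  is_hom_powk sX dX h -> forall (f : 'I_k -> T) j, h (dX f) j = h (f j) j.
Proof.
case/andP => _ /forallP Hd f j.
have Ef : (fun_of_fin [ffun i => f i] : 'I_k -> T) = f.
  by apply: funext => i; rewrite ffunE.
have := eqP (Hd [ffun i => f i]); rewrite Ef => ->.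
by rewrite /powk_d ffunE.
Qed.

Lemma hom_back (T : finType) sX dX (h : {ffun T -> {ffun 'I_k -> Y}}) :
  is_hom_powk sX dX h -> forall (j : 'I_k) z i0, val i0 = 0%N -> h (iter (k - j) sX z) j = h z i0.
Proof.
move=> Hh j z i0 H0; rewrite (hom_iter Hh); congr (h z _); apply: val_inj.
by rewrite iter_ordS H0 subnKC ?modnn // ltnW.
Qed.

End Aux.
Arguments hom_coord0 {k Y T sX dX h}.
Arguments hom_d {k Y T sX dX h}.
Arguments hom_back {k Y T sX dX h}.


Theorem corollary3p8 (R : realType) (k : nat) (Y : finType) :
  (0 < k)%N ->
  strongly_abelian_cong (@powk_s k Y) (@powk_d k Y) (fun _ _ => True) /\
  (forall (n : nat) (T : finType) (sX : T -> T) (dX : ('I_k -> T) -> T),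
     (0 < #|T|)%N -> (#|T| <= n)%N ->
     ((nhom_powk Y sX dX)%:R : R) <= (#|Y|%:R : R) `^ ((n%:R : R) `^ (k%:R)^-1)).
Proof.
move=> k0; split.
  split; first by split.
  move=> m m0 t x y z _ _ Hxy; apply/ffunP => j.
  rewrite !tvP.
  have := congr1 (fun F : {ffun 'I_k -> Y} => F j) Hxy; rewrite /= !tvP.
  by case: ifP.
move=> n T sX dX HT HTn.
pose Hs := {h : {ffun T -> {ffun 'I_k -> Y}} | is_hom_powk sX dX h}.
have NE : nhom_powk Y sX dX = #|{: Hs}| by rewrite card_sig /nhom_powk cardsE.
pose o0 : 'I_k := Ordinal k0.
pose phi (x : T) : {ffun Hs -> Y} := [ffun h : Hs => val h x o0].
pose C := [set phi x | x : T].
have stepA : (#|{: Hs}| <= #|Y| ^ #|C|)%N.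
  pose g (h : Hs) : {ffun {c | c \in C} -> Y} := [ffun c : {c | c \in C} => val c h].
  have ginj : injective g.
    move=> h1 h2 E; apply: val_inj; apply/ffunP => x; apply/ffunP => j.
    rewrite (hom_coord0 (valP h1) j x o0) // (hom_coord0 (valP h2) j x o0) //.
    have Cx : phi (iter j sX x) \in C by apply/imsetP; exists (iter j sX x).
    have := congr1 (fun F : {ffun {c | c \in C} -> Y} => F (@exist _ (fun c => c \in C) _ Cx)) E.
    by rewrite /g /= !ffunE.
  move: (leq_card g ginj); rewrite card_ffun card_sig => H; apply: (leq_trans H); apply: eq_leq; congr expn; rewrite card_sig; exact: eq_card.
have [x0 _] : exists x0 : T, x0 \in T by apply/card_gt0P.
pose pickx (c : {ffun Hs -> Y}) := odflt x0 [pick x | phi x == c].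
have pickxP c : c \in C -> phi (pickx c) = c.
  case/imsetP => x _ ->; rewrite /pickx.
  case: pickP => [y /eqP //|/(_ x)]; by rewrite eqxx.
pose psi (F : {ffun 'I_k -> {c | c \in C}}) : T :=
  dX (fun j => iter (k - j) sX (pickx (val (F j)))).
have psiP (F : {ffun 'I_k -> {c | c \in C}}) (j : 'I_k) (h : Hs) : val (F j) h = val h (psi F) j.
  rewrite (hom_d (valP h)) (hom_back (valP h) j _ o0) //.
  by rewrite -{1}(pickxP (val (F j)) (valP (F j))) /phi ffunE.
have stepB : (#|C| ^ k <= #|T|)%N.
  have psiinj : injective psi.
    move=> F1 F2 E; apply/ffunP => j; apply: val_inj; apply/ffunP => h.
    by rewrite psiP E -psiP.
  by have := leq_card psi psiinj; rewrite card_ffun card_sig card_ord.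
rewrite NE.
have C0 : (0 < #|C|)%N.
  by apply/card_gt0P; exists (phi x0); apply/imsetP; exists x0.
have [Y0|Y1] := eqVneq #|Y| 0%N.
  move: stepA; rewrite Y0 exp0n // leqn0 => /eqP ->.
  rewrite mulr0n; exact: powR_ge0.
have y1 : (1 : R) <= #|Y|%:R by rewrite ler1n lt0n.
apply: (le_trans (y := (#|Y|%:R : R) `^ (#|C|%:R))).
  by rewrite powR_mulrn ?ler0n // -natrX ler_nat.
apply: ler_powR => //.
have kR : (0 : R) < k%:R by rewrite ltr0n.
have -> : (#|C|%:R : R) = ((#|C|%:R) `^ k%:R) `^ (k%:R^-1).
  by rewrite -powRrM divff ?gt_eqF // powRr1 ?ler0n.
apply: ge0_ler_powR; rewrite ?invr_ge0 ?ler0n ?nnegrE ?powR_ge0 //.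
by rewrite powR_mulrn ?ler0n // -natrX ler_nat (leq_trans stepB HTn).
Qed.
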